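(* Let $\kappa\in\mathbb N_0\cup\{\infty\}$ and let $(s_j)_{j=0}^\kappa\in\mathcal H^{\ge,e}_{q,\kappa}$. Then for each $n\in\mathbb N_0$ with $2n\le\kappa$, the subspace $\mathcal D_n$ is a Dubovoj subspace corresponding to $(H_n,T_{q,n})$, i.e. $T_{q,n}^*(\mathcal D_n)\subseteq\mathcal D_n$ and $\mathcal N(H_n)\cap\mathcal D_n=\{0\}$, $\mathcal N(H_n)+\mathcal D_n=\mathbb C^{(n+1)q}$; moreover $\dim\mathcal D_n=\operatorname{rank}H_n=\sum_{j=0}^n\operatorname{rank}L_j$.
   Context: For a sequence $(s_j)$ of complex $q\times q$ matrices, $H_n:=[s_{j+k}]_{j,k=0}^n$. $\mathcal H^{\ge}_{q,2n}$ is the set of $(s_j)_{j=0}^{2n}$ with $H_n$ positive semidefinite; $\mathcal H^{\ge,e}_{q,2n}$ is the set of $(s_j)_{j=0}^{2n}$ for which there exist $s_{2n+1},s_{2n+2}$ with $(s_j)_{j=0}^{2n+2}\in\mathcal H^{\ge}_{q,2n+2}$; $\mathcal H^{\ge,e}_{q,2n+1}$ is the set of $(s_j)_{j=0}^{2n+1}$ for which there is $s_{2n+2}$ with $(s_j)_{j=0}^{2n+2}\in\mathcal H^{\ge}_{q,2n+2}$; $\mathcal H^{\ge,e}_{q,\infty}$ is the set of $(s_j)_{j=0}^\infty$ with $H_n$ positive semidefinite for all $n$. $T_{q,n}:=[\delta_{j,k+1}I_q]_{j,k=0}^n$. Schur complements: $L_0:=s_0$, $L_j:=s_{2j}-\operatorname{row}(s_i)_{i=j}^{2j-1}H_{j-1}^\dagger\operatorname{col}(s_i)_{i=j}^{2j-1}$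 ($j\ge1$), $\dagger$ the Moore–Penrose inverse. $\mathcal D_n:=\mathcal R(\operatorname{diag}(L_0,\dots,L_n))\subseteq\mathbb C^{(n+1)q}$. *)

(* Defs.v *)
From HB Require Import structures.
From mathcomp Require Import all_boot all_order all_algebra.
From mathcomp Require Import complex.
From mathcomp Require Import reals.
From Stdlib Require Import ClassicalEpsilon.
Set Implicit Arguments. Unset Strict Implicit. Unset Printing Implicit Defensive.
Import Order.TTheory GRing.Theory Num.Theory.
Local Open Scope ring_scope.

Section Defs.
Variable C : numClosedFieldType.

Definition ctr m n (A : 'M[C]_(m, n)) : 'M[C]_(n, m) := (map_mx Num.conj A)^T.

Definition psd n (A : 'M[C]_n) : Prop :=
  ctr A = A /\ forall x : 'cV[C]_n, 0 <= (ctr x *m A *m x) 0 0.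

Definition penrose m n (A : 'M[C]_(m, n)) (X : 'M[C]_(n, m)) : Prop :=
  [/\ A *m X *m A = A, X *m A *m X = X, ctr (A *m X) = A *m X & ctr (X *m A) = X *m A].
Definition MPinv m n (A : 'M[C]_(m, n)) : 'M[C]_(n, m) :=
  epsilon (inhabits 0) (penrose A).

(* splitting an index of 'I_(a * q) into (block index, index inside block) *)
Definition blk a q (i : 'I_(a * q)) : 'I_a * 'I_q :=
  enum_val (cast_ord (esym (mxvec_cast a q)) i).

Definition blockq q k1 k2 (F : 'I_k1 -> 'I_k2 -> 'M[C]_q) : 'M[C]_(k1 * q, k2 * q) :=
  \matrix_(i, j) F (blk i).1 (blk j).1 (blk i).2 (blk j).2.

Variable q : nat.
Implicit Types s : nat -> 'M[C]_q.

Definition Hk k s : 'M[C]_(k * q) := blockq (fun a b : 'I_k => s (a + b)%N).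
Definition Hn n s : 'M[C]_(n.+1 * q) := Hk n.+1 s.

Definition Tq n : 'M[C]_(n.+1 * q) :=
  blockq (fun a b : 'I_n.+1 => if a == b.+1 :> nat then 1%:M else 0).

Definition rowS j s : 'M[C]_(1 * q, j * q) := blockq (fun (_ : 'I_1) (b : 'I_j) => s (j + b)%N).
Definition colS j s : 'M[C]_(j * q, 1 * q) := blockq (fun (a : 'I_j) (_ : 'I_1) => s (j + a)%N).

Definition Lj s j : 'M[C]_q :=
  if j is 0 then s 0%N
  else s (2 * j)%N - castmx (mul1n q, mul1n q) (rowS j s *m MPinv (Hk j s) *m colS j s).

Definition diagL n s : 'M[C]_(n.+1 * q) :=
  blockq (fun a b : 'I_n.+1 => if a == b then Lj s a else 0).

Definition inRange m n (A : 'M[C]_(m, n)) (x : 'cV[C]_m) : Prop := exists y : 'cV[C]_n, x = A *m y.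
Definition inKer m n (A : 'M[C]_(m, n)) (x : 'cV[C]_n) : Prop := A *m x = 0.

(* kappa : option nat, None = infinity; the sequence is (s_j)_{j=0}^kappa (values beyond kappa irrelevant) *)
Definition Hext (kappa : option nat) s : Prop :=
  match kappa with
  | None => forall n, psd (Hn n s)
  | Some k => exists t : nat -> 'M[C]_q,
      (forall j, (j <= k)%N -> t j = s j) /\ psd (Hn (k./2).+1 t)
  end.

Definition le_kappa (m : nat) (kappa : option nat) : Prop :=
  match kappa with None => True | Some k => (m <= k)%N end.

End Defs.

(* Main.v *)
Require Import Defs.
From HB Require Import structures.
From mathcomp Require Import all_boot all_order all_algebra.
From mathcomp Require Import complex reals.
From mathcomp Require Import ring zify.
From Stdlib Require Import ClassicalEpsilon.
Set Implicit Arguments. Unset Strict Implicit. Unset Printing Implicit Defensive.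
Import Order.TTheory GRing.Theory Num.Theory.
Local Open Scope ring_scope.

Lemma index_allpairs (T1 T2 : eqType) (s : seq T1) (t : seq T2) x y :
  uniq s -> x \in s -> y \in t ->
  index (x, y) [seq (a, b) | a <- s, b <- t] = (index x s * size t + index y t)%N.
Proof.
elim: s => //= x0 s IH /andP[nx0 us]; rewrite inE index_cat.
case: eqP => [<- _ yt|nx /= xs yt].
  rewrite mem_map ?yt; last by move=> ? ? [].
  by rewrite index_map ?eqxx // => ? ? [].
have -> : (x, y) \in [seq (x0, b) | b <- t] = false.
  by apply/negP => /mapP[b _ [e _]]; apply: nx.
rewrite IH // size_map.
case: eqP => [e|_]; first by case: nx.
by rewrite mulSn addnA.
Qed.

Lemma idx_val k q (a : 'I_k) (r : 'I_q) : nat_of_ord (mxvec_index a r) = (a * q + r)%N.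
Proof.
rewrite /mxvec_index /= /enum_rank enum_rank_in.unlock /= insubdK; last first.
  by rewrite unfold_in /= cardE index_mem mem_enum.
rewrite enumT unlock /= /prod_enum index_allpairs ?enum_uniq ?mem_enum //.
by rewrite !index_enum_ord size_enum_ord.
Qed.

Lemma idx_val' k q (a : 'I_k) (r : 'I_q) : \val (mxvec_index a r) = (a * q + r)%N.
Proof. exact: idx_val. Qed.

Section Lin.
Variable C : numClosedFieldType.

Lemma ctrE m n (A : 'M[C]_(m, n)) i j : ctr A i j = (A j i)^*.
Proof. by rewrite !mxE. Qed.

Lemma ctrK m n (A : 'M[C]_(m, n)) : ctr (ctr A) = A.
Proof. by apply/matrixP=> i j; rewrite !ctrE conjCK. Qed.

Lemma ctrM m n p (A : 'M[C]_(m, n)) (B : 'M[C]_(n, p)) :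
  ctr (A *m B) = ctr B *m ctr A.
Proof. by rewrite /ctr map_mxM trmx_mul. Qed.

Lemma ctrD m n (A B : 'M[C]_(m, n)) : ctr (A + B) = ctr A + ctr B.
Proof. by rewrite /ctr map_mxD linearD. Qed.

Lemma ctrN m n (A : 'M[C]_(m, n)) : ctr (- A) = - ctr A.
Proof. by rewrite /ctr map_mxN linearN. Qed.

Lemma ctrB m n (A B : 'M[C]_(m, n)) : ctr (A - B) = ctr A - ctr B.
Proof. by rewrite ctrD ctrN. Qed.

Lemma ctr0 m n : ctr (0 : 'M[C]_(m, n)) = 0.
Proof. by rewrite /ctr map_mx0 trmx0. Qed.

Lemma ctr1 n : ctr (1%:M : 'M[C]_n) = 1%:M.
Proof. by rewrite /ctr map_mx1 trmx1. Qed.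

Lemma ctr_sum m n (I : Type) (r : seq I) (P : pred I) (F : I -> 'M[C]_(m, n)) :
  ctr (\sum_(i <- r | P i) F i) = \sum_(i <- r | P i) ctr (F i).
Proof.
by elim/big_rec2: _ => [|i x y _ <-]; rewrite ?ctr0 ?ctrD.
Qed.

Lemma ctrV n (A : 'M[C]_n) : ctr (invmx A) = invmx (ctr A).
Proof. by rewrite /ctr map_invmx trmx_inv. Qed.

Lemma rank_ctr m n (A : 'M[C]_(m, n)) : \rank (ctr A) = \rank A.
Proof. by rewrite /ctr mxrank_tr mxrank_map. Qed.

Lemma dot_ge0 n (x : 'cV[C]_n) : 0 <= (ctr x *m x) 0 0.
Proof.
rewrite mxE sumr_ge0 // => i _; rewrite ctrE -normCKC exprn_ge0 //.
Qed.

Lemma dot0 n (x : 'cV[C]_n) : (ctr x *m x) 0 0 = 0 -> x = 0.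
Proof.
rewrite mxE => /eqP; rewrite psumr_eq0 => [/allP H|i _]; last first.
  by rewrite ctrE -normCKC exprn_ge0.
apply/matrixP=> i j; rewrite (ord1 j) mxE.
have := H i (mem_index_enum _); rewrite ctrE -normCKC /= sqrf_eq0 normr_eq0.
by move/eqP.
Qed.

Lemma inj_col k r (M : 'M[C]_(k, r)) (x : 'cV[C]_r) :
  \rank M = r -> M *m x = 0 -> x = 0.
Proof.
move=> rM Mx.
have fr : row_free M^T by rewrite /row_free mxrank_tr rM.
have : x^T *m M^T = 0 *m M^T by rewrite -trmx_mul Mx trmx0 mul0mx.
by move/(row_free_inj fr)/(congr1 trmx); rewrite trmxK trmx0.
Qed.

Lemma inj_unit n (M : 'M[C]_n) :
  (forall x : 'cV[C]_n, M *m x = 0 -> x = 0) -> M \in unitmx.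
Proof.
move=> H; rewrite -unitmx_tr -row_free_unit; apply/inj_row_free => v Hv.
have := H v^T; rewrite -[M]trmxK -trmx_mul Hv trmx0 => /(_ erefl).
by move/(congr1 trmx); rewrite trmxK trmx0.
Qed.

Lemma gram_unit k r (M : 'M[C]_(k, r)) : \rank M = r -> ctr M *m M \in unitmx.
Proof.
move=> rM; apply: inj_unit => x Hx; apply: (inj_col rM); apply: dot0.
by rewrite ctrM -mulmxA (mulmxA (ctr M)) Hx mulmx0 mxE.
Qed.

Lemma MP_factor m r n (F : 'M[C]_(m, r)) (G : 'M[C]_(r, n)) :
  ctr F *m F \in unitmx -> G *m ctr G \in unitmx -> exists X, penrose (F *m G) X.
Proof.
move=> uF uG.
pose FF := ctr F *m F; pose GG := G *m ctr G.
exists (ctr G *m invmx GG *m invmx FF *m ctr F).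
have eAX : F *m G *m (ctr G *m invmx GG *m invmx FF *m ctr F) = F *m invmx FF *m ctr F.
  by rewrite !mulmxA -(mulmxA F) -/GG mulmxK.
have eXA : (ctr G *m invmx GG *m invmx FF *m ctr F) *m (F *m G) = ctr G *m invmx GG *m G.
  by rewrite !mulmxA -(mulmxA _ (ctr F)) -/FF mulmxKV.
split.
- by rewrite eAX !mulmxA -(mulmxA _ (ctr F)) -/FF mulmxKV.
- by rewrite eXA !mulmxA -(mulmxA _ G) -/GG mulmxKV.
- by rewrite eAX !ctrM ctrK ctrV /FF ctrM ctrK mulmxA.
- by rewrite eXA !ctrM ctrK ctrV /GG ctrM ctrK mulmxA.
Qed.

Lemma MP_exists m n (A : 'M[C]_(m, n)) : exists X, penrose A X.
Proof.
have rF : \rank (col_base A) = \rank A.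
  by have := col_base_full A; rewrite /row_full => /eqP.
have rG : \rank (ctr (row_base A)) = \rank A.
  by rewrite rank_ctr; have := row_base_free A; rewrite /row_free => /eqP.
have uF := gram_unit rF; have uG := gram_unit rG.
rewrite ctrK in uG.
by rewrite -(mulmx_base A); apply: MP_factor.
Qed.

Lemma MPinvP m n (A : 'M[C]_(m, n)) : penrose A (MPinv A).
Proof. by rewrite /MPinv; apply: epsilon_spec; apply: MP_exists. Qed.


Lemma colM m n p (M : 'M[C]_(m, n)) (X : 'M[C]_(n, p)) j :
  M *m col j X = col j (M *m X).
Proof. by apply/matrixP=> i k; rewrite !mxE; apply: eq_bigr => l _; rewrite !mxE. Qed.

Lemma ker_ext m m' n p (A : 'M[C]_(m, n)) (B : 'M[C]_(m', n)) (X : 'M[C]_(n, p)) :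
  (forall x : 'cV[C]_n, A *m x = 0 -> B *m x = 0) -> A *m X = 0 -> B *m X = 0.
Proof.
move=> H AX; apply/matrixP=> i j.
have := H (col j X); rewrite colM AX.
have -> : col j (0 : 'M[C]_(m, p)) = 0 by apply/matrixP=> a b; rewrite !mxE.
move=> /(_ erefl) E.
have -> : (B *m X) i j = (col j (B *m X)) i 0 by rewrite [in RHS]mxE.
by rewrite -colM E !mxE.
Qed.

Lemma map_conjK m n (A : 'M[C]_(m, n)) : map_mx Num.conj (map_mx Num.conj A) = A.
Proof. by apply/matrixP=> i j; rewrite !mxE conjCK. Qed.

Lemma range_incl n p (A : 'M[C]_n) (B : 'M[C]_(n, p)) :
  ctr A = A -> (forall x : 'cV[C]_n, A *m x = 0 -> ctr B *m x = 0) -> exists Z, B = A *m Z.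
Proof.
move=> hA H.
have H2 : forall x : 'cV[C]_n, A^T *m x = 0 -> B^T *m x = 0.
  move=> x; rewrite -{1}hA /ctr trmxK => /(congr1 (map_mx Num.conj)).
  rewrite map_mxM map_conjK map_mx0 => /H /(congr1 (map_mx Num.conj)).
  by rewrite map_mxM map_conjK map_mx0 /ctr map_trmx map_conjK.
have : (B^T <= A^T)%MS.
  by rewrite submxE; apply/eqP; apply: (ker_ext H2); apply: mulmx_coker.
case/submxP => D hD; exists D^T.
by rewrite -[B]trmxK hD trmx_mul trmxK.
Qed.

Definition fm n (P : 'M[C]_n) (u v : 'cV[C]_n) : C := (ctr u *m P *m v) 0 0.

Lemma fmDl n (P : 'M[C]_n) u u' v : fm P (u + u') v = fm P u v + fm P u' v.
Proof. by rewrite /fm ctrD !mulmxDl mxE. Qed.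
Lemma fmDr n (P : 'M[C]_n) u v v' : fm P u (v + v') = fm P u v + fm P u v'.
Proof. by rewrite /fm mulmxDr mxE. Qed.
Lemma fmZl n (P : 'M[C]_n) c u v : fm P (c *: u) v = c^* * fm P u v.
Proof. by rewrite /fm /ctr map_mxZ /= linearZ /= -!scalemxAl mxE. Qed.
Lemma fmZr n (P : 'M[C]_n) c u v : fm P u (c *: v) = c * fm P u v.
Proof. by rewrite /fm -scalemxAr mxE. Qed.
Lemma fmC n (P : 'M[C]_n) u v : ctr P = P -> fm P u v = (fm P v u)^*.
Proof.
move=> hP; rewrite /fm -[in RHS]ctrE !ctrM ctrK hP mulmxA //.
Qed.

Lemma psd_ker n (P : 'M[C]_n) x : psd P -> fm P x x = 0 -> P *m x = 0.
Proof.
case=> hP pP hx.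
pose y := P *m x.
pose a := fm P x y; pose b := fm P y y.
have ea : a = (ctr y *m y) 0 0 by rewrite /a /fm /y ctrM hP mulmxA.
have a0 : 0 <= a by rewrite ea dot_ge0.
have b0 : 0 <= b by apply: pP.
have eya : fm P y x = a by rewrite fmC // -/a geC0_conj.
have b1 : 0 <= b + 1 by rewrite addr_ge0.
pose u := (b + 1) *: x - a *: y.
have := pP u; rewrite -/(fm P u u) /u !(fmDl, fmDr, fmZl, fmZr) -!scaleN1r.
rewrite !(fmZl, fmZr) hx eya -/a -/b rmorphN1 (geC0_conj a0) (geC0_conj b1).
have -> : (b + 1) * ((b + 1) * 0 + -1 * (a * a)) +
  ((b + 1) * (-1 * (a * a)) + -1 * (a * (-1 * (a * b)))) = - (a * a * (b + 2)).
  by ring.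
rewrite oppr_ge0 => h.
have h2 : a * a * (b + 2) = 0.
  apply/eqP; rewrite eq_le h /= mulr_ge0 // ?mulr_ge0 // addr_ge0 //.
have : a * a = 0.
  move/eqP: h2; rewrite mulf_eq0 => /orP[/eqP //|].
  by rewrite gt_eqF // ltr_wpDl.
move/eqP; rewrite mulf_eq0 orbb => /eqP a00.
by apply: dot0; rewrite -ea.
Qed.


End Lin.

Section Blocks.
Variable C : numClosedFieldType.
Variable q : nat.

Definition blo k p (M : 'M[C]_(k * q, p)) (a : 'I_k) : 'M[C]_(q, p) :=
  \matrix_(r, c) M (mxvec_index a r) c.
Definition bl k p (M : 'M[C]_(k * q, p)) (a : nat) : 'M[C]_(q, p) :=
  if insub a is Some a' then blo M a' else 0.
Definition mkb k p (f : nat -> 'M[C]_(q, p)) : 'M[C]_(k * q, p) :=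
  \matrix_(i, c) f (blk i).1 (blk i).2 c.

Lemma blk_idx k (a : 'I_k) (r : 'I_q) : blk (mxvec_index a r) = (a, r).
Proof. by rewrite /blk /mxvec_index cast_ordK enum_rankK. Qed.

Lemma idx_blk k (i : 'I_(k * q)) : mxvec_index (blk i).1 (blk i).2 = i.
Proof. by case/mxvec_indexP: i => a r; rewrite blk_idx. Qed.

Lemma bl_val k p (M : 'M[C]_(k * q, p)) (a : 'I_k) : bl M a = blo M a.
Proof. by rewrite /bl valK. Qed.

Lemma bl_out k p (M : 'M[C]_(k * q, p)) a : (k <= a)%N -> bl M a = 0.
Proof. by move=> h; rewrite /bl insubF // ltnNge h. Qed.

Lemma bl_mkb k p (f : nat -> 'M[C]_(q, p)) a : (a < k)%N -> bl (mkb k f) a = f a.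
Proof.
move=> ha; rewrite -[a]/(val (Ordinal ha)) bl_val.
by apply/matrixP=> r c; rewrite !mxE blk_idx.
Qed.

Lemma mkb_bl k p (M : 'M[C]_(k * q, p)) : mkb k (bl M) = M.
Proof.
by apply/matrixP=> i c; rewrite !mxE bl_val mxE idx_blk.
Qed.

Lemma mkb_ext k p (f g : nat -> 'M[C]_(q, p)) :
  (forall a, (a < k)%N -> f a = g a) -> mkb k f = mkb k g.
Proof. by move=> h; apply/matrixP=> i c; rewrite !mxE h. Qed.

Lemma bl_inj k p (M N : 'M[C]_(k * q, p)) :
  (forall a, (a < k)%N -> bl M a = bl N a) -> M = N.
Proof. by move=> h; rewrite -(mkb_bl M) -(mkb_bl N); apply: mkb_ext. Qed.

Lemma sum_blk k (F : 'I_(k * q) -> C) :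
  \sum_i F i = \sum_(a < k) \sum_(r < q) F (mxvec_index a r).
Proof.
rewrite pair_big /= (reindex (uncurry (@mxvec_index k q))) /=; last first.
  by case: (curry_mxvec_bij k q) => g h1 h2; exists g => x _; [apply: h1|apply: h2].
by apply: eq_bigr => -[a r].
Qed.

Lemma bl_mul k1 k2 p (F : 'I_k1 -> 'I_k2 -> 'M[C]_q) (X : 'M[C]_(k2 * q, p)) (a : 'I_k1) :
  bl (blockq F *m X) a = \sum_(b < k2) F a b *m bl X b.
Proof.
rewrite bl_val; apply/matrixP => r c; rewrite !mxE summxE sum_blk.
apply: eq_bigr => b _; rewrite !mxE bl_val; apply: eq_bigr => r' _.
by rewrite !mxE !blk_idx.
Qed.

Lemma ctr_bl k p1 p2 (X : 'M[C]_(k * q, p1)) (Y : 'M[C]_(k * q, p2)) :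
  ctr X *m Y = \sum_(a < k) ctr (bl X a) *m bl Y a.
Proof.
apply/matrixP => i j; rewrite !mxE summxE sum_blk.
apply: eq_bigr => a _; rewrite !mxE !bl_val; apply: eq_bigr => r _.
by rewrite !mxE.
Qed.

Lemma ctr_blockq k1 k2 (F : 'I_k1 -> 'I_k2 -> 'M[C]_q) :
  ctr (blockq F) = blockq (fun a b => ctr (F b a)).
Proof. by apply/matrixP => i j; rewrite !mxE. Qed.

Lemma blockq_mul k1 k2 k3 (F : 'I_k1 -> 'I_k2 -> 'M[C]_q) (G : 'I_k2 -> 'I_k3 -> 'M[C]_q) :
  blockq F *m blockq G = blockq (fun a b => \sum_(c < k2) F a c *m G c b).
Proof.
apply/matrixP => i j; rewrite !mxE summxE sum_blk.
apply: eq_bigr => c _; rewrite !mxE; apply: eq_bigr => r _.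
by rewrite !mxE !blk_idx.
Qed.

Lemma blockq_ext k1 k2 (F G : 'I_k1 -> 'I_k2 -> 'M[C]_q) :
  (forall a b, F a b = G a b) -> blockq F = blockq G.
Proof. by move=> h; apply/matrixP => i j; rewrite !mxE h. Qed.

Lemma blD k p (M N : 'M[C]_(k * q, p)) a : bl (M + N) a = bl M a + bl N a.
Proof.
case: (ltnP a k) => ha; last by rewrite !bl_out // addr0.
by rewrite -[a]/(val (Ordinal ha)) !bl_val; apply/matrixP => r c; rewrite !mxE.
Qed.

Lemma blN k p (M : 'M[C]_(k * q, p)) a : bl (- M) a = - bl M a.
Proof.
case: (ltnP a k) => ha; last by rewrite !bl_out // oppr0.
by rewrite -[a]/(val (Ordinal ha)) !bl_val; apply/matrixP => r c; rewrite !mxE.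
Qed.

Lemma bl0 k p a : bl (0 : 'M[C]_(k * q, p)) a = 0.
Proof.
case: (ltnP a k) => ha; last by rewrite !bl_out.
by rewrite -[a]/(val (Ordinal ha)) !bl_val; apply/matrixP => r c; rewrite !mxE.
Qed.

Lemma blM k p p' (M : 'M[C]_(k * q, p)) (Z : 'M[C]_(p, p')) a :
  bl (M *m Z) a = bl M a *m Z.
Proof.
case: (ltnP a k) => ha; last by rewrite !bl_out // mul0mx.
rewrite -[a]/(val (Ordinal ha)) !bl_val; apply/matrixP => r c; rewrite !mxE.
by apply: eq_bigr => l _; rewrite !mxE.
Qed.

Lemma mkb_bl' k p (f : nat -> 'M[C]_(q, p)) : mkb k f = mkb k (bl (mkb k f)).
Proof. by apply: mkb_ext => a ha; rewrite bl_mkb. Qed.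

End Blocks.

Lemma sum_widen (V : zmodType) k m (km : (k <= m)%N) (F : 'I_m -> V) :
  (forall a : 'I_m, (k <= a)%N -> F a = 0) ->
  \sum_(a < m) F a = \sum_(a < k) F (widen_ord km a).
Proof.
move=> F0; rewrite -big_ord_narrow (bigID (fun a : 'I_m => (a < k)%N)) /=.
by rewrite [X in _ + X]big1 ?addr0 // => a; rewrite -leqNgt; apply: F0.
Qed.

Lemma sum_delta (V : zmodType) k c (G : nat -> V) :
  \sum_(b < k) (if (b == c :> nat) then G b else 0) = if (c < k)%N then G c else 0.
Proof.
case: ltnP => hc.
  rewrite (bigD1 (Ordinal hc)) //= eqxx big1 ?addr0 // => b nb.
  by rewrite ifN //; apply: contra nb => /eqP e; apply/eqP/val_inj.
by apply: big1 => b _; rewrite ifN // neq_ltn (leq_trans (ltn_ord b) hc).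
Qed.

Section Hankel.
Variable C : numClosedFieldType.
Variable q : nat.
Implicit Types s t : nat -> 'M[C]_q.

Lemma bl_Hk s k p (X : 'M[C]_(k * q, p)) a : (a < k)%N ->
  bl (Hk k s *m X) a = \sum_(b < k) s (a + b)%N *m bl X b.
Proof. by move=> ha; rewrite -[a]/(val (Ordinal ha)); apply: bl_mul. Qed.

Lemma fm_Hk s k (x y : 'cV[C]_(k * q)) :
  fm (Hk k s) x y = (\sum_(a < k) ctr (bl x a) *m \sum_(b < k) s (a + b)%N *m bl y b) 0 0.
Proof.
rewrite /fm -mulmxA ctr_bl; apply: (congr1 (fun M : 'M[C]_1 => M 0 0)); apply: eq_bigr => a _.
by rewrite bl_Hk.
Qed.

Lemma psd_herm s k : psd (Hk k s) -> forall a b, (a < k)%N -> (b < k)%N ->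
  ctr (s (a + b)%N) = s (a + b)%N.
Proof.
case=> h _ a b ha hb; apply/matrixP => r c.
move: h => /matrixP /(_ (mxvec_index (Ordinal hb) r) (mxvec_index (Ordinal ha) c)).
by rewrite /Hk ctr_blockq !mxE !blk_idx /= addnC.
Qed.

Lemma bl_pad k m p (x : 'M[C]_(k * q, p)) a : (k <= m)%N ->
  bl (mkb m (bl x)) a = bl x a.
Proof.
move=> km; case: (ltnP a m) => ha; first by rewrite bl_mkb.
by rewrite !bl_out // (leq_trans km).
Qed.

Lemma fm_pad s k m (x : 'cV[C]_(k * q)) : (k <= m)%N ->
  fm (Hk m s) (mkb m (bl x)) (mkb m (bl x)) = fm (Hk k s) x x.
Proof.
move=> km; rewrite !fm_Hk; apply: (congr1 (fun M : 'M[C]_1 => M 0 0)).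
rewrite (sum_widen km) => [|a ha]; last by rewrite bl_pad // bl_out // ctr0 mul0mx.
apply: eq_bigr => a _ /=; rewrite bl_pad //; congr (_ *m _).
rewrite (sum_widen km) => [|b hb]; last by rewrite bl_pad // bl_out // mulmx0.
by apply: eq_bigr => b _; rewrite bl_pad.
Qed.

Lemma psd_sub s k m : (k <= m)%N -> psd (Hk m s) -> psd (Hk k s).
Proof.
move=> km hP; split.
  rewrite /Hk ctr_blockq; apply: blockq_ext => a b /=.
  by rewrite addnC (psd_herm hP) // (leq_trans _ km).
move=> x; rewrite -/(fm _ x x) -(fm_pad s x km); case: hP => _; apply.
Qed.


Definition E1 : 'M[C]_(1 * q, q) := \matrix_(i, c) (i == mxvec_index (ord0 : 'I_1) c)%:R.

Lemma mulE1 p (M : 'M[C]_(p, 1 * q)) r c : (M *m E1) r c = M r (mxvec_index ord0 c).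
Proof.
rewrite mxE (bigD1 (mxvec_index ord0 c)) //= mxE eqxx mulr1 big1 ?addr0 // => i ni.
by rewrite mxE (negbTE ni) mulr0.
Qed.

Lemma cast1E (M : 'M[C]_(1 * q, 1 * q)) : castmx (mul1n q, mul1n q) M = bl (M *m E1) 0.
Proof.
rewrite -[0%N]/(val (ord0 : 'I_1)) bl_val; apply/matrixP => r c.
rewrite castmxE [in RHS]mxE mulE1; congr (M _ _); apply: val_inj; rewrite idx_val' //.
Qed.

Lemma blockE1 k (F : 'I_k -> 'I_1 -> 'M[C]_q) (a : 'I_k) : bl (blockq F) a *m E1 = F a ord0.
Proof.
apply/matrixP => r c; rewrite mulE1 bl_val !mxE !blk_idx //.
Qed.

Lemma Lchar s j : psd (Hk j.+1 s) -> exists w : nat -> 'M[C]_q,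
  [/\ w j = 1%:M, (forall a, (j < a)%N -> w a = 0) &
      forall a, (a <= j)%N -> \sum_(b < j.+1) s (a + b)%N *m w b = if a == j then Lj s j else 0].
Proof.
case: j => [|j] hP.
  exists (fun b => if b == 0%N then 1%:M else 0); split => //.
    by case.
  by case=> // _; rewrite big_ord1 /= mulmx1.
set j' := j.+1.
have hsH : forall m, (m <= 2 * j')%N -> ctr (s m) = s m.
  move=> m hm; have -> : m = (minn m j' + (m - minn m j'))%N by rewrite subnKC // geq_minl.
  by apply: (psd_herm hP); lia.
have hA : ctr (Hk j' s) = Hk j' s by case: (psd_sub (leqnSn j') hP).
have ker : forall x : 'cV[C]_(j' * q), Hk j' s *m x = 0 -> ctr (colS j' s) *m x = 0.
  move=> x Ax.
  have f0 : fm (Hk j' s) x x = 0 by rewrite /fm -mulmxA Ax mulmx0 mxE.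
  have := psd_ker (x := mkb j'.+1 (bl x)) hP; rewrite (fm_pad s x (leqnSn j')) => /(_ f0) P0.
  have := congr1 (fun M => bl M j') P0; rewrite bl0 bl_Hk // big_ord_recr /=.
  rewrite bl_pad // bl_out // mulmx0 addr0 => S0.
  apply: bl_inj => a; rewrite ltnS leqn0 => /eqP ->.
  rewrite -[0%N]/(val (ord0 : 'I_1)) /colS ctr_blockq bl_mul bl0 -[X in _ = X]S0.
  apply: eq_bigr => b _ /=; rewrite hsH ?bl_pad //; have := ltn_ord b; rewrite /j'; lia.
have [Z eZ] := range_incl hA ker.
set Y := MPinv (Hk j' s) *m colS j' s.
have AY : Hk j' s *m Y = colS j' s.
  by case: (MPinvP (Hk j' s)) => h1 _ _ _; rewrite /Y eZ !mulmxA h1.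
pose w := fun b : nat => if (b < j')%N then - (bl Y b *m E1) else if b == j' then 1%:M else 0.
exists w; split.
- by rewrite /w ltnn eqxx.
- by move=> a ha; rewrite /w ltnNge (ltnW ha) /= gtn_eqF.
move=> a ha; rewrite big_ord_recr /= {2}/w ltnn eqxx mulmx1.
have -> : \sum_(i < j') s (a + i)%N *m w i = - ((\sum_(i < j') s (a + i)%N *m bl Y i) *m E1).
  rewrite mulmx_suml -sumrN; apply: eq_bigr => i _; rewrite /w ltn_ord mulmxN mulmxA //.
case: eqP => [->|ne].
  rewrite /Lj -/j' -mulmxA -/Y cast1E blM /rowS -[0%N]/(val (ord0 : 'I_1)) bl_mul /=.
  by rewrite addrC; congr (s _ - _); rewrite /j'; lia.
have aj : (a < j')%N by rewrite ltn_neqAle ha andbT; apply/eqP.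
rewrite -bl_Hk // AY /colS -[a]/(val (Ordinal aj)) blockE1 /= addnC.
by rewrite addNr.
Qed.


Definition wprop s j (w : nat -> 'M[C]_q) :=
  [/\ w j = 1%:M, (forall a, (j < a)%N -> w a = 0) &
      forall a, (a <= j)%N -> \sum_(b < j.+1) s (a + b)%N *m w b = if a == j then Lj s j else 0].

Definition hermto s N := forall m, (m <= N)%N -> ctr (s m) = s m.

Lemma swap0 s k1 k2 p (w : nat -> 'M[C]_q) (g : nat -> 'M[C]_(q, p)) :
  (forall a b, (a < k1)%N -> (b < k2)%N -> ctr (s (a + b)%N) = s (a + b)%N) ->
  \sum_(a < k1) ctr (w a) *m (\sum_(b < k2) s (a + b)%N *m g b) =
  \sum_(b < k2) ctr (\sum_(a < k1) s (b + a)%N *m w a) *m g b.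
Proof.
move=> hs.
under eq_bigr => a _ do rewrite mulmx_sumr.
rewrite exchange_big /=; apply: eq_bigr => b _.
rewrite ctr_sum mulmx_suml; apply: eq_bigr => a _.
by rewrite ctrM [(b + a)%N]addnC hs // mulmxA.
Qed.

Lemma swapL s j w p (g : nat -> 'M[C]_(q, p)) : wprop s j w -> hermto s (2 * j) ->
  \sum_(a < j.+1) ctr (w a) *m (\sum_(b < j.+1) s (a + b)%N *m g b) = ctr (Lj s j) *m g j.
Proof.
case=> w1 w0 wL hs; rewrite swap0 => [|a b ha hb]; last by apply: hs; lia.
rewrite (eq_bigr (fun b : 'I_j.+1 => if (b == j :> nat) then ctr (Lj s j) *m g b else 0)).
  by rewrite (sum_delta _ _ (fun b => ctr (Lj s j) *m g b)) ltnSn.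
move=> b _; rewrite wL ?leq_ord //; case: eqP => _ //.
by rewrite ctr0 mul0mx.
Qed.

Lemma Lherm s j w : wprop s j w -> hermto s (2 * j) -> ctr (Lj s j) = Lj s j.
Proof.
move=> hw hs; have := swapL w hw hs; case: hw => w1 w0 wL.
rewrite w1 mulmx1 => <-.
rewrite (eq_bigr (fun a : 'I_j.+1 => if (a == j :> nat) then ctr (w a) *m Lj s j else 0)).
  by rewrite (sum_delta _ _ (fun a => ctr (w a) *m Lj s j)) ltnSn w1 ctr1 mul1mx.
move=> a _; rewrite wL ?leq_ord //; case: eqP => _ //.
by rewrite mulmx0.
Qed.

Lemma bl_diag s n p (y : 'M[C]_(n.+1 * q, p)) a : (a <= n)%N ->
  bl (diagL n s *m y) a = Lj s a *m bl y a.
Proof.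
move=> ha; rewrite -ltnS in ha; rewrite -[a]/(val (Ordinal ha)) bl_mul /=.
rewrite (eq_bigr (fun b : 'I_n.+1 => if (b == a :> nat) then Lj s b *m bl y b else 0)).
  by rewrite (sum_delta _ _ (fun b => Lj s b *m bl y b)) ha.
move=> b _; rewrite (_ : (Ordinal ha == b) = (b == a :> nat)); last by rewrite eq_sym.
by case: eqP => [->|_]; rewrite ?mul0mx.
Qed.

Lemma bl_T n p (X : 'M[C]_(n.+1 * q, p)) a : (a <= n)%N ->
  bl (ctr (@Tq C q n) *m X) a = bl X a.+1.
Proof.
move=> ha; rewrite -ltnS in ha; rewrite /Tq ctr_blockq -[a]/(val (Ordinal ha)) bl_mul /=.
rewrite (eq_bigr (fun b : 'I_n.+1 => if (b == a.+1 :> nat) then bl X b else 0)).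
  by rewrite (sum_delta _ _ (fun b => bl X b)); case: ltnP => // h; rewrite bl_out.
move=> b _; case: eqP => [->|ne]; first by rewrite ctr1 mul1mx.
by rewrite ctr0 mul0mx.
Qed.


Lemma psd_hermto s k : psd (Hk k.+1 s) -> hermto s (2 * k).
Proof.
move=> hP m hm; have -> : m = (minn m k + (m - minn m k))%N by rewrite subnKC // geq_minl.
by apply: (psd_herm hP); lia.
Qed.

Lemma ker_range s n (ws : nat -> nat -> 'M[C]_q) (x y : 'cV[C]_(n.+1 * q)) :
  (forall j, (j <= n)%N -> wprop s j (ws j)) -> hermto s (2 * n) ->
  Hk n.+1 s *m x = 0 -> x = diagL n s *m y -> x = 0.
Proof.
move=> hw hs Hx xD.
have step : forall j, (j <= n)%N -> (forall a, (j < a)%N -> bl x a = 0) -> bl x j = 0.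
  move=> j jn hz.
  have hsj : hermto s (2 * j) by move=> m hm; apply: hs; lia.
  have jn' : (j.+1 <= n.+1)%N by [].
  have Lx : Lj s j *m bl x j = 0.
    rewrite -(Lherm (hw j jn) hsj) -(swapL (bl x) (hw j jn) hsj).
    apply: big1 => a _.
    have ha : (a < n.+1)%N by have := ltn_ord a; lia.
    have := congr1 (fun M => bl M a) Hx; rewrite bl0 bl_Hk //.
    rewrite (sum_widen jn') => [|b hb]; last by rewrite hz ?mulmx0.
    by move=> /= ->; rewrite mulmx0.
  have xj : bl x j = Lj s j *m bl y j by rewrite xD bl_diag.
  rewrite xj in Lx *; apply: dot0.
  by rewrite ctrM (Lherm (hw j jn) hsj) -mulmxA Lx mulmx0 mxE.
have all0 : forall d a, (n - d <= a)%N -> bl x a = 0.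
  elim=> [|d IH] a ha.
    case: (ltnP n a) => h; first by rewrite bl_out.
    have -> : a = n by lia.
    by apply: step => // b hb; rewrite bl_out.
  case: (leqP (n - d) a) => h; first exact: IH.
  have an : (a <= n)%N by lia.
  by apply: step => // b hb; apply: IH; lia.
by apply: bl_inj => a ha; rewrite bl0; apply: (all0 n); lia.
Qed.

Lemma wsum s j w m p (v : 'M[C]_(q, p)) r : wprop s j w -> (j < m)%N ->
  \sum_(b < m) s (r + b)%N *m (w b *m v) = (\sum_(b < j.+1) s (r + b)%N *m w b) *m v.
Proof.
case=> _ w0 _ jm; rewrite (sum_widen jm) => [|b hb]; last by rewrite w0 ?mul0mx ?mulmx0.
by rewrite mulmx_suml; apply: eq_bigr => b _; rewrite mulmxA.
Qed.

Lemma nested s j w w' (v : 'cV[C]_q) : wprop s j w -> wprop s j.+1 w' ->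
  psd (Hk j.+3 s) -> Lj s j *m v = 0 -> Lj s j.+1 *m v = 0.
Proof.
move=> hw hw' hP Lv.
have hs : hermto s (2 * j.+2) by apply: psd_hermto.
pose u b := w b *m v.
pose U := mkb j.+3 u.
have f0 : fm (Hk j.+3 s) U U = 0.
  rewrite fm_Hk big1 ?mxE // => a _.
  rewrite bl_mkb // (eq_bigr (fun b : 'I_j.+3 => s (a + b)%N *m (w b *m v))); last first.
    by move=> b _; rewrite bl_mkb.
  rewrite (wsum _ _ hw) 1?ltnW //.
  case: (leqP a j) => h.
    case: hw => _ _ ->; rewrite // -/u; case: eqP => [e|_]; last by rewrite !mul0mx mulmx0.
    by rewrite e Lv mulmx0.
  by rewrite /u; case: hw => _ -> // _; rewrite mul0mx ctr0 mul0mx.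
have HU := psd_ker hP f0.
have S0 : forall r, (r < j.+3)%N -> (\sum_(b < j.+1) s (r + b)%N *m w b) *m v = 0.
  move=> r hr; have j3 : (j < j.+3)%N by lia.
  rewrite -(wsum _ _ hw j3).
  have := congr1 (fun M => bl M r) HU; rewrite bl0 bl_Hk // => E.
  rewrite -[X in _ = X]E.
  by apply: eq_bigr => b _; rewrite bl_mkb.
pose u' b := if b is b'.+1 then u b' else 0.
have hs1 : hermto s (2 * j.+1) by move=> m hm; apply: hs; lia.
have E := swapL u' hw' hs1; rewrite (Lherm hw' hs1) in E.
have e1 : u' j.+1 = v by rewrite /u' /u; case: hw => -> _ _; rewrite mul1mx.
rewrite e1 in E; rewrite -E.
apply: big1 => a _; rewrite big_ord_recl mulmx0 add0r.
have ha : (a.+1 < j.+3)%N by have := ltn_ord a; lia.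
suff -> : \sum_(i < j.+1) s (a + lift ord0 i)%N *m u' (lift ord0 i) = 0 by rewrite mulmx0.
rewrite -[X in _ = X](S0 a.+1 ha) mulmx_suml.
apply: eq_bigr => b _; rewrite /= mulmxA; congr (s _ *m _ *m _).
by rewrite /bump /=; lia.
Qed.


Lemma desc_ind (P : nat -> Prop) n : (forall a, (n < a)%N -> P a) ->
  (forall j, (j <= n)%N -> (forall a, (j < a)%N -> P a) -> P j) -> forall a, P a.
Proof.
move=> hout step.
have all0 : forall d a, (n - d <= a)%N -> P a.
  elim=> [|d IH] a ha.
    case: (ltnP n a) => h; first exact: hout.
    have -> : a = n by lia.
    by apply: step => // b hb; apply: hout.
  case: (leqP (n - d) a) => h; first exact: IH.
  have an : (a <= n)%N by lia.
  by apply: step => // b hb; apply: IH; lia.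
by move=> a; apply: (all0 n); lia.
Qed.

Lemma rankHD s n (ws : nat -> nat -> 'M[C]_q) :
  (forall j, (j <= n)%N -> wprop s j (ws j)) -> hermto s (2 * n) ->
  \rank (diagL n s) = \rank (Hk n.+1 s).
Proof.
move=> hw hs.
pose W := blockq (fun a b : 'I_n.+1 => ws b a).
have hs2 : forall a b, (a < n.+1)%N -> (b < n.+1)%N -> ctr (s (a + b)%N) = s (a + b)%N.
  by move=> a b ha hb; apply: hs; lia.
have eD : ctr W *m (Hk n.+1 s *m W) = diagL n s.
  rewrite ctr_blockq /Hk !blockq_mul; apply: blockq_ext => a b.
  case: (leqP b a) => hab.
    rewrite swap0 //.
    rewrite (eq_bigr (fun d : 'I_n.+1 => if (d == a :> nat) then ctr (Lj s a) *m ws b d else 0)).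
      rewrite (sum_delta _ _ (fun d => ctr (Lj s a) *m ws b d)) ltn_ord.
      case: (hw a (leq_ord a)) => wa1 _ _; case: (hw b (leq_ord b)) => wb1 wb0 _.
      case: (ltngtP b a) hab => [ba _|//|ba _].
        by rewrite wb0 // mulmx0 ifN //; apply/eqP => e; move: ba; rewrite e ltnn.
      have eab : a = b by apply: val_inj; rewrite /= ba.
      by rewrite eab eqxx wb1 mulmx1 (Lherm (hw b (leq_ord b))) // => m hm; apply: hs; have := leq_ord b; lia.
    move=> d _; case: (hw a (leq_ord a)) => _ wa0 wL.
    case: (leqP d a) => hda.
      rewrite (sum_widen (leq_ord a : (a.+1 <= n.+1)%N)) => [|c hc]; last by rewrite wa0 ?mulmx0.
      by rewrite /= wL //; case: eqP => // _; rewrite ctr0 mul0mx.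
    case: (hw b (leq_ord b)) => _ wb0 _.
    by rewrite wb0 ?mulmx0 ?(gtn_eqF hda) //; apply: leq_trans hda.
  rewrite ifN; last by apply/eqP => e; move: hab; rewrite e ltnn.
  apply: big1 => c _; case: (hw a (leq_ord a)) => _ wa0 _.
  case: (leqP c a) => hca; last by rewrite wa0 // ctr0 mul0mx.
  case: (hw b (leq_ord b)) => _ wb0 wL.
  rewrite (sum_widen (leq_ord b : (b.+1 <= n.+1)%N)) => [|d hd]; last by rewrite wb0 ?mulmx0.
  by rewrite /= wL ?(leq_trans hca (ltnW hab)) // ifN ?mulmx0 // neq_ltn (leq_ltn_trans hca hab).
have uW : W \in unitmx.
  apply: inj_unit => x Wx.
  suff : forall a, bl x a = 0 by move=> h; apply: bl_inj => a _; rewrite h bl0.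
  apply: (desc_ind (n := n)) => [a ha|j jn hz]; first by rewrite bl_out.
  have := congr1 (fun M => bl M j) Wx; rewrite bl0; rewrite -ltnS in jn.
  rewrite -[j]/(val (Ordinal jn)) bl_mul /= => E; rewrite -[X in _ = X]E.
  rewrite (eq_bigr (fun b : 'I_n.+1 => if (b == j :> nat) then bl x b else 0)).
    by rewrite (sum_delta _ _ (fun b => bl x b)) jn.
  move=> b _; case: (ltngtP b j) => hb.
  - by case: (hw b (leq_ord b)) => _ -> // _; rewrite mul0mx.
  - by rewrite hz // mulmx0.
  - by case: (hw b (leq_ord b)) => w1 _ _; rewrite -hb w1 mul1mx.
have fW : row_free W by rewrite row_free_unit.
rewrite -eD -[ctr W *m _]ctrK ctrM ctrK rank_ctr mxrankMfree // rank_ctr mxrankMfree //.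
Qed.


Lemma blk_vals k (i : 'I_(k * q)) :
  (nat_of_ord (blk i).1 = i %/ q)%N /\ (nat_of_ord (blk i).2 = i %% q)%N.
Proof.
have q0 : (0 < q)%N by case: (blk i).2 => r hr; apply: leq_ltn_trans hr.
have e : nat_of_ord i = ((blk i).1 * q + (blk i).2)%N by rewrite -{1}(idx_blk i) idx_val.
rewrite e divnMDl // divn_small ?addn0 // modnMDl modn_small //.
Qed.

Definition dg k (G : nat -> 'M[C]_q) : 'M[C]_(k * q) :=
  blockq (fun a b : 'I_k => if a == b then G (nat_of_ord a) else 0).

Lemma dgE k G (x y : 'I_(k * q)) :
  dg k G x y = if (x %/ q == y %/ q)%N then G (x %/ q)%N (blk x).2 (blk y).2 else 0.
Proof.
rewrite mxE -val_eqE /=; have [e1 _] := blk_vals x; have [e2 _] := blk_vals y.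
by rewrite e1 e2; case: ifP => _; rewrite ?mxE.
Qed.

Lemma blk2_eq k k' (x : 'I_(k * q)) (y : 'I_(k' * q)) :
  nat_of_ord x = nat_of_ord y -> (blk x).2 = (blk y).2.
Proof.
move=> e; apply: val_inj => /=; have [_ e1] := blk_vals x; have [_ e2] := blk_vals y.
by rewrite e1 e2 e.
Qed.

Lemma blk2_r k k' (x : 'I_(k * q)) (r : 'I_q) :
  nat_of_ord x = (k' * q + r)%N -> (blk x).2 = r.
Proof.
move=> e; apply: val_inj => /=; have [_ e1] := blk_vals x.
by rewrite e1 e modnMDl modn_small.
Qed.

Lemma dg_split k G :
  castmx (mulSnr k q, mulSnr k q) (dg k.+1 G) = block_mx (dg k G) 0 0 (G k).
Proof.
apply/matrixP => x y; rewrite castmxE.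
rewrite -[x]splitK -[y]splitK; case: (split x) => i'; case: (split y) => j' /=;
  rewrite ?block_mxEul ?block_mxEur ?block_mxEdl ?block_mxEdr !dgE ?mxE /=.
- by rewrite (blk2_eq (x := cast_ord _ _) (y := i')) // (blk2_eq (x := cast_ord _ _) (y := j')).
- have q0 : (0 < q)%N by case: j' => r hr; apply: leq_ltn_trans hr.
  rewrite (divnMDl _ _ q0) (divn_small (ltn_ord j')) addn0.
  by rewrite ifN // ltn_eqF // ltn_divLR // ltn_ord.
- have q0 : (0 < q)%N by case: i' => r hr; apply: leq_ltn_trans hr.
  rewrite (divnMDl _ _ q0) (divn_small (ltn_ord i')) addn0.
  by rewrite ifN // gtn_eqF // ltn_divLR // ltn_ord.
- have q0 : (0 < q)%N by case: i' => r hr; apply: leq_ltn_trans hr.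
  rewrite !(divnMDl _ _ q0) (divn_small (ltn_ord i')) (divn_small (ltn_ord j')) addn0 eqxx.
  by rewrite (blk2_r (k' := k) (r := i')) ?(blk2_r (k' := k) (r := j')).
Qed.

End Hankel.

Lemma rank_castmx (F : fieldType) m1 n1 m2 n2 (e : (m1 = m2) * (n1 = n2)) (A : 'M[F]_(m1, n1)) :
  \rank (castmx e A) = \rank A.
Proof. by case: e => e1 e2; case: m2 / e1; case: n2 / e2; rewrite castmx_id. Qed.

Lemma rank_dg (C : numClosedFieldType) q k (G : nat -> 'M[C]_q) :
  \rank (dg k G) = (\sum_(a < k) \rank (G a))%N.
Proof.
elim: k => [|k IH].
  by rewrite big_ord0; apply/eqP; rewrite -leqn0; apply: rank_leq_row.
by rewrite -(rank_castmx (mulSnr k q, mulSnr k q)) dg_split rank_diag_block_mx IH big_ord_recr.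
Qed.

Lemma decomp (C : numClosedFieldType) N (H D : 'M[C]_N) :
  (forall x : 'cV[C]_N, H *m x = 0 -> (exists y : 'cV[C]_N, x = D *m y) -> x = 0) -> \rank D = \rank H ->
  forall x : 'cV[C]_N, exists u v : 'cV[C]_N, [/\ H *m u = 0, exists y : 'cV[C]_N, v = D *m y & x = u + v].
Proof.
move=> hk hr x.
pose K := kermx H^T.
have cap0 : (K :&: D^T)%MS == 0.
  apply/rowV0P => v; rewrite sub_capmx => /andP[/sub_kermxP vK /submxP[z ez]].
  have h : v^T = 0.
    apply: hk; first by rewrite -[H]trmxK -trmx_mul vK trmx0.
    by exists z^T; rewrite ez trmx_mul trmxK.
  by rewrite -[v]trmxK h trmx0.
have rs := mxrank_sum_cap K D^T.
move/eqP: cap0 => cap0; rewrite cap0 mxrank0 addn0 mxrank_ker !mxrank_tr hr in rs.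
have full : row_full (K + D^T)%MS.
  by rewrite /row_full rs subnK // rank_leq_row.
have := submx_full x^T full; case/sub_addsmxP => u ex.
exists (u.1 *m K)^T, (u.2 *m D^T)^T; split.
- by rewrite -[H]trmxK -trmx_mul -mulmxA mulmx_ker mulmx0 trmx0.
- by exists u.2^T; rewrite trmx_mul trmxK.
- by rewrite -linearD /= -ex trmxK.
Qed.

Lemma fchoice (A B : Type) (P : A -> B -> Prop) :
  (forall a, exists b, P a b) -> exists f : A -> B, forall a, P a (f a).
Proof.
move=> h; exists (fun a => proj1_sig (constructive_indefinite_description _ (h a))).
by move=> a; case: (constructive_indefinite_description _ (h a)).
Qed.

Lemma main_t (C : numClosedFieldType) q n (t : nat -> 'M[C]_q) : psd (Hk n.+2 t) ->
  let D := diagL n t in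
  let H := Hn n t in
  [/\ (forall x, inRange D x -> inRange D (ctr (@Tq _ q n) *m x)),
      (forall x, inKer H x -> inRange D x -> x = 0),
      (forall x, exists u v, [/\ inKer H u, inRange D v & x = u + v]),
      \rank D = \rank H
    & \rank H = (\sum_(j < n.+1) \rank (Lj t j))%N].
Proof.
move=> hP D H.
have hs1 : hermto t (2 * n.+1) by apply: psd_hermto.
have hs : hermto t (2 * n) by move=> m hm; apply: hs1; lia.
have [ws hws] : exists ws : nat -> nat -> 'M[C]_q, forall j, (j <= n)%N -> wprop t j (ws j).
  apply: (fchoice (P := fun j w => (j <= n)%N -> wprop t j w)) => j.
  case: (leqP j n) => jn; last by exists (fun _ => 0).
  have jl : (j.+1 <= n.+2)%N by lia.
  have [w hw] := Lchar (psd_sub jl hP).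
  by exists w.
have hsj : forall j, (j <= n)%N -> hermto t (2 * j) by move=> j jn m hm; apply: hs; lia.
have c2 : forall x, inKer H x -> inRange D x -> x = 0.
  by move=> x hx [y ey]; apply: (ker_range hws hs hx ey).
have c4 : \rank D = \rank H by apply: (rankHD hws hs).
split => //.
- move=> x [y ->].
  have [Zs hZ] : exists Zs : nat -> 'M[C]_q, forall a, (a < n)%N -> Lj t a.+1 = Lj t a *m Zs a.
    apply: (fchoice (P := fun a Z => (a < n)%N -> Lj t a.+1 = Lj t a *m Z)) => a.
    case: (ltnP a n) => an; last by exists 0.
    have [Z eZ] : exists Z, Lj t a.+1 = Lj t a *m Z.
      apply: range_incl; first by apply: (Lherm (hws a (ltnW an)) (hsj a (ltnW an))).
      move=> v Lv; rewrite (Lherm (hws a.+1 an) (hsj a.+1 an)).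
      by apply: (nested (hws a (ltnW an)) (hws a.+1 an)) => //; apply: psd_sub hP; lia.
    by exists Z.
  exists (mkb n.+1 (fun a => Zs a *m bl y a.+1)).
  apply: bl_inj => a ha; rewrite ltnS in ha.
  rewrite /D bl_T // [in RHS]bl_diag // bl_mkb ?ltnS //.
  case: (ltnP a n) => an.
    by rewrite bl_diag // hZ // mulmxA.
  have -> : a = n by lia.
  by rewrite !bl_out ?mulmx0.
- by apply: decomp.
- by rewrite -c4 /D (_ : diagL n t = dg n.+1 (Lj t)) // rank_dg.
Qed.

Lemma Lj_ext (C : numClosedFieldType) q (s t : nat -> 'M[C]_q) j :
  (forall m, (m <= 2 * j)%N -> s m = t m) -> Lj s j = Lj t j.
Proof.
case: j => [|j] h; first by rewrite /= h.
have eH : Hk j.+1 s = Hk j.+1 t.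
  by apply: blockq_ext => a b; apply: h; have := ltn_ord a; have := ltn_ord b; lia.
have eR : rowS j.+1 s = rowS j.+1 t.
  by apply: blockq_ext => a b; apply: h; have := ltn_ord b; lia.
have eC : colS j.+1 s = colS j.+1 t.
  by apply: blockq_ext => a b; apply: h; have := ltn_ord a; lia.
by rewrite /Lj eH eR eC h.
Qed.

Lemma diagL_ext (C : numClosedFieldType) q n (s t : nat -> 'M[C]_q) :
  (forall j, (j <= n)%N -> Lj s j = Lj t j) -> diagL n s = diagL n t.
Proof.
move=> h; apply: blockq_ext => a b; case: eqP => // _.
by rewrite h // -ltnS.
Qed.

Lemma Hn_ext (C : numClosedFieldType) q n (s t : nat -> 'M[C]_q) :
  (forall m, (m <= 2 * n)%N -> t m = s m) -> Hn n s = Hn n t.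
Proof.
move=> h; apply: blockq_ext => a b; rewrite h //.
by have := ltn_ord a; have := ltn_ord b; lia.
Qed.

Theorem proposition8p4 (R : realType) (q : nat) (kappa : option nat)
    (s : nat -> 'M[R[i]]_q) (hs : Hext kappa s) (n : nat) (hn : le_kappa (2 * n) kappa) :
  let D := diagL n s in
  let H := Hn n s in
  [/\ (forall x, inRange D x -> inRange D (ctr (@Tq _ q n) *m x)),
      (forall x, inKer H x -> inRange D x -> x = 0),
      (forall x, exists u v, [/\ inKer H u, inRange D v & x = u + v]),
      \rank D = \rank H
    & \rank H = (\sum_(j < n.+1) \rank (Lj s j))%N].
Proof.
move=> D H.
have [t [et hP]] : exists t : nat -> 'M[R[i]]_q,
    (forall m, (m <= 2 * n)%N -> t m = s m) /\ psd (Hk n.+2 t).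
  case: kappa hs hn => [k|] /= hs hn.
  - case: hs => t [et hP]; exists t; split.
      by move=> m hm; apply: et; apply: leq_trans hm hn.
    have hP' : psd (Hk (k./2).+2 t) := hP.
    apply: psd_sub hP'; rewrite !ltnS.
    have : ((2 * n)./2 <= k./2)%N by apply: half_leq.
    by rewrite mul2n doubleK.
  - by exists s; split => //; exact: (hs n.+1).
have eL : forall j, (j <= n)%N -> Lj s j = Lj t j.
  by move=> j jn; apply: Lj_ext => m hm; rewrite et //; lia.
have eD : D = diagL n t by exact: diagL_ext.
have eH : H = Hn n t by exact: Hn_ext.
rewrite eD eH (eq_bigr (fun j : 'I_n.+1 => \rank (Lj t j))) => [|j _]; last first.
  have jn : (j <= n)%N by rewrite -ltnS.
  by rewrite (eL j jn).
have M := main_t hP.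
exact: M.
Qed.
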